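(* Let $x$ be an element of a commutative ring $R$ and $U$ a variable. The maps $f_0:R[U^{-1}]\to R$, $\sum_{i=0}^nr_iU^{-i}\mapsto r_0$, and $f_1:R[U^{-1}]\to R_x$, $f(U^{-1})\mapsto f(x^{-1})/x$, define a morphism of complexes from $K^\bullet(x-U;R[U^{-1}]):0\to R[U^{-1}]\xrightarrow{x-U}R[U^{-1}]\to0$ to $\check{C}_x:0\to R\xrightarrow{\iota_x}R_x\to0$, and this morphism is a quasi-isomorphism.
   Context: $R[U^{-1}]$ is the module of inverse polynomials: the free $R$-module with basis $U^{-i}$, $i\ge0$, which is an $R[U]$-module via $U^j\cdot U^{-i}=U^{j-i}$ if $j\le i$ and $=0$ if $j>i$. Both complexes are in cohomological degrees $0,1$; $\iota_x(r)=r/1$. *)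

(* Defs.v *)
From HB Require Import structures.
From mathcomp Require Import all_boot all_order all_algebra.
Set Implicit Arguments. Unset Strict Implicit. Unset Printing Implicit Defensive.
Import Order.TTheory GRing.Theory Num.Theory.
Local Open Scope ring_scope.

Section Defs.
Variable R : comNzRingType.

(* R[U^{-1}]: an element sum_i r_i U^{-i} is represented by the polynomial
   p : {poly R} with p`_i = r_i (a polynomial in the variable V = U^{-1}). *)
Definition invpoly := {poly R}.

(* The action of U:  U * U^{-i} = U^{-(i-1)} for i >= 1, and U * U^0 = 0. *)
Definition Uact (p : invpoly) : invpoly := drop_poly 1 p.

Definition dK (x : R) (p : invpoly) : invpoly := x *: p - Uact p.

(* The localization R_x, presented as fractions a / x^n, i.e. pairs (a, n),
   with the usual equality of fractions. *)
Definition locR := (R * nat)%type.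
Definition loc_eq (x : R) (a b : locR) : Prop :=
  exists k : nat, x ^+ k * (a.1 * x ^+ b.2 - b.1 * x ^+ a.2) = 0.
Definition loc_add (x : R) (a b : locR) : locR :=
  (a.1 * x ^+ b.2 + b.1 * x ^+ a.2, (a.2 + b.2)%N).
Definition loc_scale (r : R) (a : locR) : locR := (r * a.1, a.2).
Definition loc0 : locR := (0, 0%N).

Definition iotax (r : R) : locR := (r, 0%N).

Definition f0 (p : invpoly) : R := p`_0.

(* f_1 : f(U^{-1}) |-> f(x^{-1})/x = sum_{i<n} r_i x^{-i-1}
       = (sum_{i<n} r_i x^{n-i}) / x^{n+1},  n = size p. *)
Definition f1 (x : R) (p : invpoly) : locR :=
  (\sum_(i < size p) p`_i * x ^+ (size p - i), (size p).+1).
End Defs.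

(* Main.v *)
Require Import Defs.
From HB Require Import structures.
From mathcomp Require Import all_boot all_order all_algebra.
From mathcomp Require Import ring.
Import GRing.Theory.
Local Open Scope ring_scope.

Section Aux.
Variable R : comNzRingType.
Variable x : R.

Lemma coef_dK (p : invpoly R) i : (dK x p)`_i = x * p`_i - p`_i.+1.
Proof. by rewrite /dK /Uact coefB coefZ coef_drop_poly addn1. Qed.

Definition gsum (N : nat) (p : invpoly R) : R := \sum_(i < N) p`_i * x ^+ (N - i).

Lemma gsumS (p : invpoly R) N : (size p <= N)%N -> gsum N.+1 p = x * gsum N p.
Proof.
move=> hN; rewrite /gsum big_ord_recr /= (nth_default _ hN) mul0r addr0 mulr_sumr.
apply: eq_bigr => i _; rewrite subSn ?(ltnW (ltn_ord i)) // exprS /=; ring.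
Qed.

Lemma gsumX (p : invpoly R) k : gsum (size p + k) p = x ^+ k * gsum (size p) p.
Proof.
elim: k => [|k IH]; first by rewrite addn0 expr0 mul1r.
by rewrite addnS gsumS ?leq_addr // IH exprS mulrA.
Qed.

Lemma gsum_lin a (p q : invpoly R) N : gsum N (a *: p + q) = a * gsum N p + gsum N q.
Proof.
rewrite /gsum mulr_sumr -big_split /=; apply: eq_bigr => i _.
rewrite coefD coefZ; ring.
Qed.

Lemma loc_refl a : loc_eq x a a.
Proof. by exists 0%N; rewrite subrr mulr0. Qed.

Lemma loc_sym a b : loc_eq x a b -> loc_eq x b a.
Proof. by case=> k hk; exists k; rewrite -opprB mulrN hk oppr0. Qed.

Lemma loc_trans a b c : loc_eq x a b -> loc_eq x b c -> loc_eq x a c.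
Proof.
case=> k hk [j hj]; exists (k + j + b.2)%N.
transitivity (x ^+ j * x ^+ c.2 * (x ^+ k * (a.1 * x ^+ b.2 - b.1 * x ^+ a.2))
  + x ^+ k * x ^+ a.2 * (x ^+ j * (b.1 * x ^+ c.2 - c.1 * x ^+ b.2))).
  rewrite !exprD; ring.
by rewrite hk hj !mulr0 addr0.
Qed.

Lemma f1_eq (p : invpoly R) N : (size p <= N)%N -> loc_eq x (f1 x p) (gsum N p, N.+1).
Proof.
move=> hN; rewrite -(subnKC hN); set k := (N - size p)%N.
exists 0%N; rewrite /f1 /= gsumX -/(gsum _ _) expr0 mul1r -addSn exprD; ring.
Qed.

Lemma loc_eq_same a b n : a = b -> loc_eq x (a, n) (b, n).
Proof. by move=> ->; apply: loc_refl. Qed.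

End Aux.
Arguments loc_trans {R x a b c}.
Arguments loc_sym {R x a b}.
Arguments loc_refl {R x a}.
Arguments f1_eq {R x p N}.
Arguments loc_eq_same {R x a b n}.
Arguments gsumS {R x p N}.
Arguments gsumX {R x p k}.

Theorem lemma6p6 (R : comNzRingType) (x : R) :
  (* f_0 and f_1 are R-linear *)
  (forall (a : R) (p q : invpoly R), f0 (a *: p + q) = a * f0 p + f0 q) /\
  (forall (a : R) (p q : invpoly R),
      loc_eq x (f1 x (a *: p + q)) (loc_add x (loc_scale a (f1 x p)) (f1 x q))) /\
  (* morphism of complexes: f_1 o (x - U) = iota_x o f_0 *)
  (forall p : invpoly R, loc_eq x (f1 x (dK x p)) (iotax (f0 p))) /\
  (* quasi-isomorphism, H^0: the induced map ker(x-U) -> ker(iota_x) is bijective *)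
  (forall p : invpoly R, dK x p = 0 -> f0 p = 0 -> p = 0) /\
  (forall r : R, loc_eq x (iotax r) (loc0 R) -> exists p : invpoly R, dK x p = 0 /\ f0 p = r) /\
  (* quasi-isomorphism, H^1: the induced map
     coker(x-U) -> R_x / iota_x(R) is bijective *)
  (forall a : locR R, exists (p : invpoly R) (r : R),
      loc_eq x a (loc_add x (f1 x p) (iotax r))) /\
  (forall (p : invpoly R) (r : R),
      loc_eq x (f1 x p) (iotax r) -> exists q : invpoly R, p = dK x q).
Proof.
split; first by move=> a p q; rewrite /f0 coefD coefZ.
split.
  move=> a p q; set n := size p; set m := size q.
  have hs : (size (a *: p + q)%R <= n + m.+1)%N.
    apply: leq_trans (size_polyD _ _) _; rewrite geq_max.
    rewrite (leq_trans (size_scale_leq _ _)) ?leq_addr //.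
    by rewrite (leq_trans _ (leq_addl n _)) ?leqnSn.
  apply: loc_trans; first exact: (f1_eq hs).
  idtac.
  rewrite /loc_add /loc_scale /f1 /= -/n -/m -/(gsum _ x n p) -/(gsum _ x m q).
  rewrite gsum_lin gsumX.
  have -> : gsum _ x (n + m.+1) q = x ^+ n.+1 * gsum _ x m q.
    by rewrite addnS -addSn addnC gsumX.
  have -> : (n + m.+1).+1 = (n.+1 + m.+1)%N by rewrite addSn.
  apply: loc_eq_same; ring.
split.
  move=> p; set n := size p.
  have hs : (size (dK x p) <= n)%N.
    rewrite /dK; apply: leq_trans (size_polyD _ _) _; rewrite geq_max.
    rewrite size_scale_leq size_polyN /Uact size_drop_poly leq_subr //.
  apply: loc_trans; first exact: (f1_eq hs).
  have -> : gsum _ x n (dK x p) = p`_0 * x ^+ n.+1.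
    have h1 := @gsumS _ x p n (leqnn n).
    rewrite /gsum big_ord_recl /= subn0 in h1.
    transitivity (x * gsum _ x n p - \sum_(i < n) p`_(bump 0 i) * x ^+ (n.+1 - bump 0 i)).
      rewrite /gsum mulr_sumr -sumrB; apply: eq_bigr => i _.
      rewrite coef_dK /bump /= add1n subSS; ring.
    rewrite /gsum -h1; ring.
  exists 0%N; rewrite /iotax /f0 /=; ring.
split.
  move=> p hd h0; apply/polyP => i; rewrite coef0.
  elim: i => [//|i IH].
  have := congr1 (fun q : invpoly R => q`_i) hd; rewrite /= coef_dK coef0 IH mulr0 sub0r.
  by move/eqP; rewrite oppr_eq0 => /eqP.
split.
  move=> r [k hk]; rewrite /iotax /loc0 /= expr0 mulr1 mul0r subr0 in hk.
  exists (\poly_(i < k.+1) (r * x ^+ i)); split; last by rewrite /f0 coef_poly /= expr0 mulr1.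
  apply/polyP => i; rewrite coef_dK !coef_poly coef0.
  case: (ltngtP i.+1 k.+1) => h.
  - by rewrite exprS; ring.
  - by rewrite mulr0 subr0.
  - move: h => [->]; rewrite subr0; transitivity (x * (x ^+ k * r)); first ring.
    by rewrite hk mulr0.
split.
  move=> [b n]; exists ((b * x) *: 'X^n), 0.
  set p := (b * x) *: 'X^n.
  apply: loc_sym; apply: (@loc_trans _ x _ (f1 x p)).
    case: (f1 x p) => c m; exists 0%N.
    by rewrite /loc_add /iotax /= addn0 mul0r addr0 mulr1 subrr mulr0.
  have hp : (size p <= n.+1)%N.
    by rewrite (leq_trans (size_scale_leq _ _)) // size_polyXn.
  apply: loc_trans; first exact: (@f1_eq _ x p n.+1 hp).
  have -> : gsum _ x n.+1 p = b * x * x.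
    rewrite /gsum big_ord_recr /= big1 => [|i _].
      by rewrite coefZ coefXn eqxx subSn // subnn expr1 add0r mulr1.
    by rewrite coefZ coefXn (ltn_eqF (ltn_ord i)) mulr0 mul0r.
  exists 0%N; rewrite /= -addn2 exprD; ring.
move=> p r [k hk]; set n := size p.
rewrite /f1 /iotax /= -/n -/(gsum _ x n p) expr0 mulr1 in hk.
pose h i := x ^+ i * r - \sum_(j < i) p`_j * x ^+ (i.-1 - j).
have hrec i : h i.+1 = x * h i - p`_i.
  rewrite /h big_ord_recr /= subnn expr0 mulr1 mulrBr mulr_sumr exprS.
  have -> : \sum_(j < i) p`_j * x ^+ (i - j) = \sum_(j < i) x * (p`_j * x ^+ (i.-1 - j)).
    apply: eq_bigr => j _.
    have -> : (i - j = (i.-1 - j).+1)%N.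
      by case: i j => [[]//|i] j /=; rewrite subSn // -ltnS.
    by rewrite exprS; ring.
  ring.
have hn : h n.+1 = x ^+ n.+1 * r - gsum _ x n p.
  by rewrite /h big_ord_recr /= (nth_default _ (leqnn n)) mul0r addr0.
have hbig m : h (n.+1 + m)%N = x ^+ m * h n.+1.
  elim: m => [|m IH]; first by rewrite addn0 expr0 mul1r.
  rewrite addnS hrec IH nth_default ?exprS; first ring.
  by rewrite -/n (leq_trans (leqnSn n)) ?leq_addr.
have hz i : (n.+1 + k <= i)%N -> h i = 0.
  move=> hi; rewrite -(subnKC hi) -addnA hbig exprD -mulrA mulrCA.
  have -> : x ^+ k * h n.+1 = - (x ^+ k * (gsum _ x n p - r * x ^+ n.+1)).
    rewrite hn; ring.
  by rewrite hk oppr0 mulr0.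
pose q : invpoly R := \poly_(i < n.+1 + k) h i.
have hq i : q`_i = h i.
  rewrite /q coef_poly; case: ltnP => // hi; by rewrite hz.
exists q; apply/polyP => i; rewrite coef_dK !hq hrec; ring.
Qed.
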